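(* Consider the lattice Boltzmann scheme described in the context under acoustic scaling ($\lambda>0$ fixed as $\Delta x\to0$), with a prepared initialisation $w_i=\sum_{\mathfrak{e}\in\mathbb{Z}^d}w_{i,\mathfrak{e}}x^{\mathfrak{e}}$, $i\in\{1,\dots,q\}$, where each sequence $(w_{i,\mathfrak{e}})_{\mathfrak{e}}\subset\mathbb{R}$ has finite support. Set $$\omega^{(0)}_i=\sum_{\mathfrak{e}}w_{i,\mathfrak{e}},\qquad \omega^{(1)}_i=-\sum_{|\mathfrak{n}|=1}\Big(\sum_{\mathfrak{e}}w_{i,\mathfrak{e}}\mathfrak{e}^{\mathfrak{n}}\Big)\partial_x^{\mathfrak{n}},$$ so that $w_i$ applied to smooth functions expands as $\omega_i^{(0)}+\Delta x\,\omega_i^{(1)}+O(\Delta x^2)$. Then for every $n\in\mathbb{N}^*$ and $x\in\mathbb{R}^d$ the modified equation of the $n$-th starting scheme is \begin{align*} \phi(0,x)&+n\frac{\Delta x}{\lambda}\partial_t\phi(0,x)+O(\Delta x^2)=\omega^{(0)}_1\phi(0,x)\\ &-n\Delta x\Big(\mathcal{G}_{11}\omega^{(0)}_1+\sum_{r=2}^q\mathcal{G}_{1r}\omega^{(0)}_r+\frac1n\sum_{r=2}^q\mathcal{G}_{1r}(\epsilon_r\omega^{(0)}_1-\omega^{(0)}_r)\sum_{\ell=0}^{n-1}\pi_{n-\ell}(s_r)-\frac1n\omega^{(1)}_1\Big)\phi(0,x)+O(\Delta x^2), \end{align*} where $\pi_\ell(X)=1-(1-X)^\ell$.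
   Context: Fix $d\ge1$, $q\ge1$, velocities $c_1,\dots,c_q\in\mathbb{Z}^d$, invertible $M\in GL_q(\mathbb{R})$, $S=\mathrm{diag}(s_1,\dots,s_q)$ with $s_i\in(0,2]$ for $i\ge2$, $s_1\in\mathbb{R}$, $\epsilon\in\mathbb{R}^q$ with $\epsilon_1=1$, all independent of $\Delta x$; $K=I-S(I-\epsilon e_1^T)$. $\Delta t=\Delta x/\lambda$. Shifts $(x_\ell\phi)(x)=\phi(x-\Delta x e_\ell)$, multi-index notation $x^{\mathfrak{e}}=x_1^{\mathfrak{e}_1}\cdots x_d^{\mathfrak{e}_d}$, $\mathfrak{e}^{\mathfrak{n}}=\prod_\ell \mathfrak{e}_\ell^{\mathfrak{n}_\ell}$, $\partial_x^{\mathfrak{n}}=\prod_\ell\partial_{x_\ell}^{\mathfrak{n}_\ell}$. $T=M\mathrm{diag}(x^{c_1},\dots,x^{c_q})M^{-1}$, $E=TK$, time shift $(z\phi)(t)=\phi(t+\Delta t)$. $\mathcal{G}=M\mathrm{diag}(c_1\cdot\nabla,\dots,c_q\cdot\nabla)M^{-1}$. Initialisation $m(0,x)=w\,m_1^\circ(x)$ with $w$ a vector of Laurent polynomials in the shifts. The $n$-th starting scheme is $m_1(n\Delta t,x)=(E^nw)_1m_1^\circ(x)$; its modified equation is obtained by substituting a smooth $\phi$ for the unknowns in $(z^n\phi)(0,x)=((E^nw)_1\phi(0,\cdot))(x)$ and Taylor-expanding both sides in $\Delta x$. *)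

(* Defs.v *)
From HB Require Import structures.
From mathcomp Require Import all_boot all_order all_algebra.
From mathcomp Require Import all_classical all_reals all_analysis.
Set Implicit Arguments. Unset Strict Implicit. Unset Printing Implicit Defensive.
Import Order.TTheory GRing.Theory Num.Theory.
Import numFieldNormedType.Exports.
Local Open Scope ring_scope.

Section LBM.
Variable R : realType.

Fixpoint iterD (V : normedModType R) (vs : seq V) (f : V -> R) : V -> R :=
  if vs is v :: vs' then 'D_v (iterD vs' f) else f.

Definition smooth (V : normedModType R) (f : V -> R) :=
  forall vs : seq V, continuous (iterD vs f) /\
    forall (x v : V), derivable (iterD vs f) x v.

Variables d q : nat.
Notation V := 'rV[R]_d.

Definition vR (e : 'rV[int]_d) : V := map_mx intr e.

Definition unitv (l : 'I_d) : V := delta_mx 0 l.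
Definition partial (l : 'I_d) (f : V -> R) : V -> R := 'D_(unitv l) f.

(** shift operator x^e : (x^e f)(x) = f(x - dx e) *)
Definition shift (dx : R) (e : 'rV[int]_d) (f : V -> R) : V -> R :=
  fun y => f (y - dx *: vR e).

Definition mxact (A : 'M[R]_q) (u : 'I_q -> V -> R) : 'I_q -> V -> R :=
  fun i y => \sum_j A i j * u j y.

Definition Top (M : 'M[R]_q) (c : 'I_q -> 'rV[int]_d) (dx : R)
  (u : 'I_q -> V -> R) : 'I_q -> V -> R :=
  mxact M (fun j => shift dx (c j) (mxact (invmx M) u j)).

Definition Kmx (i1 : 'I_q) (s : 'rV[R]_q) (eps : 'cV[R]_q) : 'M[R]_q :=
  1%:M - diag_mx s *m (1%:M - eps *m delta_mx (0 : 'I_1) i1).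

Definition Eop i1 M c s eps dx (u : 'I_q -> V -> R) : 'I_q -> V -> R :=
  Top M c dx (mxact (Kmx i1 s eps) u).

Definition wop (w : 'I_q -> 'rV[int]_d -> R) (S : seq 'rV[int]_d) (dx : R)
  (f : V -> R) : 'I_q -> V -> R :=
  fun i y => \sum_(e <- S) w i e * shift dx e f y.

Definition start_scheme i1 M c s eps w S dx (n : nat) (f : V -> R) : V -> R :=
  iter n (Eop i1 M c s eps dx) (wop w S dx f) i1.

Definition omega0 (w : 'I_q -> 'rV[int]_d -> R) S (i : 'I_q) : R :=
  \sum_(e <- S) w i e.

(** omega^(1)_i f = - sum_{|n|=1} (sum_e w_{i,e} e^n) d^n f ;
    multi-indices with |n| = 1 are the unit vectors, e^{u_l} = e_l *)
Definition omega1 (w : 'I_q -> 'rV[int]_d -> R) S (i : 'I_q) (f : V -> R)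
  : V -> R :=
  fun y => - \sum_(l < d) (\sum_(e <- S) w i e * (e 0 l)%:~R) * partial l f y.

Definition Gop (M : 'M[R]_q) (c : 'I_q -> 'rV[int]_d) (i r : 'I_q)
  (f : V -> R) : V -> R :=
  fun y => \sum_j M i j * invmx M j r *
             \sum_(l < d) (c j 0 l)%:~R * partial l f y.

Definition pil (l : nat) (X : R) : R := 1 - (1 - X) ^+ l.

End LBM.

(* Main.v *)
Require Import Defs.
From HB Require Import structures.
From mathcomp Require Import all_boot all_order all_algebra.
From mathcomp Require Import all_classical all_reals all_analysis.
From mathcomp Require Import ring lra.
Import Order.TTheory GRing.Theory Num.Theory.
Import numFieldNormedType.Exports.
Local Open Scope ring_scope.
Local Open Scope classical_set_scope.
Section S.
Variable R : realType.
Lemma cont_near (f : R -> R) : {for 0, continuous f} -> exists2 δ : R, 0 < δ & forall t, `|t| < δ -> `|f t| <= `|f 0| + 1.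
Proof.
move=> cf.
have : \forall t \near (0:R), `|f 0 - f t| < 1.
  by move/cvgrPdist_lt : cf; apply.
move=> /nbhs_ballP [e e0 He].
exists e => // t Ht.
have := He t. rewrite /ball /= sub0r normrN => /(_ Ht) H.
rewrite (_ : f t = f 0 - (f 0 - f t)); last by rewrite opprB addrC subrK.
by apply: le_trans (ler_normB _ _) _; rewrite lerD2l ltW.
Qed.

Lemma is_derive_cont (k dk : R -> R) (a b : R) : (forall t : R, is_derive t 1 k (dk t)) ->
  {within `[a, b], continuous k}.
Proof.
move=> H; apply: derivable_within_continuous => x _.
exact: (@ex_derive _ _ _ _ _ _ _ (H x)).
Qed.

Lemma taylor1 (g g1 g2 : R -> R) :
 (forall t : R, is_derive t 1 g (g1 t)) -> (forall t : R, is_derive t 1 g1 (g2 t)) ->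
 {for 0, continuous g2} ->
 exists δ B, 0 < δ /\ forall h, 0 < h < δ -> `|g h - g 0 - h * g1 0| <= B * h^+2.
Proof.
move=> dg dg1 cg2.
have [e e0 He] := @cont_near g2 cg2.
exists e, (`|g2 0| + 1); split => // h /andP[h0 he].
have [x1 x1in E1] := MVT h0 (fun x _ => dg x) (@is_derive_cont g g1 0 h dg).
move: x1in; rewrite in_itv /= => /andP[x10 x1h].
have [x2 x2in E2] := MVT x10 (fun x _ => dg1 x) (@is_derive_cont g1 g2 0 x1 dg1).
move: x2in; rewrite in_itv /= => /andP[x20 x2h].
rewrite E1 subr0 (_ : g1 x1 * h - h * g1 0 = h * (g1 x1 - g1 0)); last by ring.
rewrite E2 subr0 normrM normrM (gtr0_norm h0) (gtr0_norm x10).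
have : `|g2 x2| <= `|g2 0| + 1.
  apply: He; rewrite gtr0_norm //; apply: lt_trans he; apply: lt_trans x1h.
  by [].
move=> Hb; have A0 := normr_ge0 (g2 x2).
apply: (@le_trans _ _ (h * ((`|g2 0| + 1) * h))).
  apply: ler_wpM2l; [exact: ltW|]; apply: ler_pM => //; exact: ltW.
by rewrite le_eqVlt; apply/orP; left; apply/eqP; ring.
Qed.

Definition sO2 (f : R -> R) := exists δ B : R, 0 < δ /\ forall h, 0 < h < δ -> `|f h| <= B * h^+2.

Lemma sO2_O (f : R -> R) : sO2 f -> f =O_ (at_right (0:R)) (fun h => h^+2).
Proof.
move=> [δ [B [d0 H]]]; apply/eqO_exP; exists (`|B| + 1).
  by apply: ltr_pwDr => //.
exists δ => //= y /= Hy y0.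
rewrite sub0r normrN gtr0_norm // in Hy.
apply: le_trans (H y _) _; first by rewrite y0 Hy.
have y2 : 0 <= y ^+ 2 by rewrite exprn_ge0 // ltW.
rewrite (ger0_norm y2); apply: ler_wpM2r => //.
by apply: le_trans (ler_norm B) _; rewrite lerDl.
Qed.

Lemma sO2_add f g : sO2 f -> sO2 g -> sO2 (fun h => f h + g h).
Proof.
move=> [d1 [B1 [d10 H1]]] [d2 [B2 [d20 H2]]].
exists (Num.min d1 d2), (B1 + B2); split; first by rewrite lt_min d10.
move=> h /andP[h0]; rewrite lt_min => /andP[hd1 hd2].
apply: le_trans (ler_normD _ _) _; rewrite mulrDl.
by apply: lerD; [apply: H1|apply: H2]; rewrite h0.
Qed.

Lemma sO2_scale (a : R) f : sO2 f -> sO2 (fun h => a * f h).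
Proof.
move=> [d1 [B1 [d10 H1]]]; exists d1, (`|a| * B1); split => // h hh.
by rewrite normrM -mulrA ler_wpM2l // H1.
Qed.

Lemma sO2_ext f g : sO2 f -> (forall h, 0 < h -> f h = g h) -> sO2 g.
Proof.
move=> [d1 [B1 [d10 H1]]] E; exists d1, B1; split => // h /andP[h0 hd].
by rewrite -E // H1 // h0.
Qed.

Lemma sO2_0 : sO2 (fun _ => 0).
Proof. by exists 1, 0; split => // h _; rewrite normr0 mul0r. Qed.

Lemma sO2_sum (T : Type) (s : seq T) (F : T -> R -> R) :
  (forall t, sO2 (F t)) -> sO2 (fun h => \sum_(t <- s) F t h).
Proof.
move=> H; elim: s => [|t s IH].
  by apply: (sO2_ext _ _ sO2_0) => h _; rewrite big_nil.
by apply: (sO2_ext _ _ (sO2_add _ _ (H t) IH)) => h _; rewrite big_cons.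
Qed.

Lemma sO2_comp (a : R) f : 0 < a -> sO2 f -> sO2 (fun h => f (a * h)).
Proof.
move=> a0 [d1 [B1 [d10 H1]]]; exists (d1 / a), (B1 * a^+2); split.
  by rewrite divr_gt0.
move=> h /andP[h0 hd]; apply: le_trans (H1 _ _) _.
  by rewrite mulr_gt0 //= -ltr_pdivlMl // mulrC.
by rewrite exprMn mulrA.
Qed.


Lemma line_derive (W : normedModType R) (F : W -> R) (a v : W) (t : R) :
  derivable F (a + t *: v) v ->
  is_derive t 1 (fun s : R => F (a + s *: v)) ('D_v F (a + t *: v)).
Proof.
move=> dF.
have E : (fun h : R => h^-1 *: (((fun s : R => F (a + s *: v)) \o shift t) (h *: 1)
            - F (a + t *: v))) =
         (fun h : R => h^-1 *: ((F \o shift (a + t *: v)) (h *: v) - F (a + t *: v))).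
  apply/funext => h /=; congr (_ *: (F _ - _)).
  by rewrite -[h *: (1:R)]/(h * 1) mulr1 scalerDl addrCA.
split; first by rewrite /derivable E.
by rewrite /derive E.
Qed.
Arguments line_derive {W F a v t}.

Lemma derive_slice (W : normedModType R) (G : R * W -> R) (v y : W) :
  'D_v (fun y => G (0, y)) y = 'D_((0:R), v) G (0, y) /\
  (derivable (fun y => G (0, y)) y v <-> derivable G (0, y) (0, v)).
Proof.
have E : (fun h : R => h^-1 *: (((fun y => G (0, y)) \o shift y) (h *: v) - G (0, y))) =
   (fun h : R => h^-1 *: ((G \o shift (0, y)) (h *: ((0:R), v)) - G (0, y))).
  apply/funext => h /=; congr (_ *: (G _ - _)).
  by apply/eqP; rewrite xpair_eqE /= scaler0 add0r !eqxx.
by rewrite /derivable /derive E.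
Qed.


Lemma iterD_slice (W : normedModType R) (F : (R * W)%type -> R) (vs : seq W) :
  Defs.iterD vs (fun y => F (0, y)) = fun y => Defs.iterD [seq ((0:R), v) | v <- vs] F (0, y).
Proof.
elim: vs => [|v vs IH] //=; rewrite IH; apply/funext => y.
exact: (derive_slice _ _ v y).1.
Qed.

Lemma smooth_slice (W : normedModType R) (F : (R * W)%type -> R) :
  smooth F -> smooth (fun y => F (0, y)).
Proof.
move=> sF vs; rewrite iterD_slice; have [c d] := sF [seq ((0:R), v) | v <- vs]; split.
  move=> y.
  have cp : (fun z : W => ((0:R), z)) @ y --> ((0:R), y).
    exact: (@cvg_pair _ _ _ (nbhs y) (nbhs (0:R)) (nbhs y) _ _ _ (fun _ => 0) id (cvg_cst _) cvg_id).
  exact: (continuous_comp cp (c _)).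
by move=> x v; apply/(derive_slice _ _ v x).2; exact: d.
Qed.

Lemma D_scale (W : normedModType R) (f : W -> R) (x v : W) (a : R) :
  (forall z w, derivable f z w) -> 'D_(a *: v) f x = a * 'D_v f x.
Proof.
move=> df.
pose g := fun s : R => f (x + s *: v).
pose k := fun s : R => a * s.
have dk : is_derive (0:R) 1 k a.
  have := is_deriveZ a (is_derive_id (0:R) 1).
  by rewrite -[a *: (1:R)]/(a * 1) mulr1 /k; move=> H; exact: H.
have dg : is_derive (0:R) 1 g ('D_v f x).
  by have := line_derive (df (x + 0 *: v) v); rewrite scale0r addr0.
have E : (fun s : R => f (x + s *: (a *: v))) = g \o k.
  by apply/funext => s; rewrite /g /k /= scalerA mulrC.
have := line_derive (df (x + 0 *: (a *: v)) (a *: v)).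
rewrite scale0r addr0 E => /@derive_val <-.
have dk' : derivable k 0 1 by exact: (@ex_derive _ _ _ _ _ _ _ dk).
have dg' : derivable g (k 0) 1.
  by rewrite /k mulr0; exact: (@ex_derive _ _ _ _ _ _ _ dg).
rewrite -derive1E (derive1_comp dk' dg').
rewrite !derive1E /k mulr0 (@derive_val _ _ _ _ _ _ _ dg) (@derive_val _ _ _ _ _ _ _ dk).
by rewrite mulrC.
Qed.


Lemma D_add (W : normedModType R) (f : W -> R) (x u v : W) :
  (forall z w, derivable f z w) -> {for x, continuous ('D_v f)} ->
  'D_(u + v) f x = 'D_u f x + 'D_v f x.
Proof.
move=> df cv.
pose q := fun (w : W) (h : R) => h^-1 *: ((f \o shift x) (h *: w) - f x).
have cq w : q w @ at_right (0:R) --> 'D_w f x.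
  have H : q w @ (0:R)^' --> 'D_w f x := df x w.
  move=> A /H [e e0 He]; exists e => // y Hy y0; apply: He => //; exact: lt0r_neq0.
pose Q := fun h => q (u + v) h - q u h - 'D_v f x.
have c1 : Q @ at_right (0:R) --> 'D_(u + v) f x - 'D_u f x - 'D_v f x.
  exact: (cvgB (cvgB (cq _) (cq _)) (cvg_cst _)).
have c2 : Q @ at_right (0:R) --> 0.
  apply/cvgrPdist_lt => e e0.
  have : \forall y \near x, `|'D_v f x - 'D_v f y| < e.
    by move/cvgrPdist_lt : cv; apply.
  move=> /nbhs_ballP [r r0 Hr].
  pose K := `|u| + `|v| + 1.
  have K0 : 0 < K by rewrite /K ltr_wpDl // addr_ge0.
  exists (r / K); first by rewrite /= divr_gt0.
  move=> h /= Hh h0.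
  rewrite sub0r normrN gtr0_norm // in Hh.
  pose G := fun s : R => f ((x + h *: u) + s *: v).
  have dG (s : R) : is_derive s 1 G ('D_v f ((x + h *: u) + s *: v)) := line_derive (df _ _).
  have [xi xiin E] := MVT h0 (fun s _ => dG s) (@is_derive_cont G _ 0 h dG).
  move: xiin; rewrite in_itv /= => /andP[xi0 xih].
  have -> : Q h = 'D_v f ((x + h *: u) + xi *: v) - 'D_v f x.
    rewrite /Q /q /= -scalerBr.
    have -> : f (h *: (u + v) + x) - f x - (f (h *: u + x) - f x) = G h - G 0.
      have e1 : h *: (u + v) + x = x + h *: u + h *: v by rewrite scalerDr addrC addrA.
      have e2 : h *: u + x = x + h *: u by rewrite addrC.
      by rewrite /G scale0r addr0 e1 e2; ring.
    rewrite E subr0; congr (_ - _).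
    by rewrite -[LHS]/(h^-1 * (_ * h)) mulrC -mulrA mulfV ?gt_eqF // mulr1.
  rewrite sub0r normrN distrC; apply: Hr.
  rewrite -ball_normE /ball_ /= -addrA opprD addrA subrr add0r normrN.
  apply: le_lt_trans (ler_normD _ _) _; rewrite !normrZ !gtr0_norm //.
  have hK : h * K < r by rewrite -ltr_pdivlMr.
  have xv : xi * `|v| <= h * `|v| by rewrite ler_wpM2r // ltW.
  have hE : h * K = h * `|u| + h * `|v| + h by rewrite /K; ring.
  lra.
have E : 'D_(u + v) f x - 'D_u f x - 'D_v f x = 0.
  by apply: (cvg_unique _ c1 c2); exact: norm_hausdorff.
by apply/eqP; rewrite -subr_eq0 opprD addrA E.
Qed.


Lemma D_sum (W : normedModType R) (f : W -> R) (x : W) (I : Type) (s : seq I) (F : I -> W) :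
  smooth f -> 'D_(\sum_(i <- s) F i) f x = \sum_(i <- s) 'D_(F i) f x.
Proof.
move=> sf; have df : forall z w, derivable f z w := fun z w => (sf [::]).2 z w.
elim: s => [|i s IH].
  by rewrite !big_nil -(scale0r (0 : W)) D_scale // mul0r.
rewrite !big_cons D_add ?IH //.
exact: ((sf [:: \sum_(j <- s) F j]).1 x).
Qed.

Lemma D_lin (d : nat) (f : 'rV[R]_d -> R) (x u : 'rV[R]_d) :
  smooth f -> 'D_u f x = \sum_(l < d) u 0 l * partial l f x.
Proof.
move=> sf; have df : forall z w, derivable f z w := fun z w => (sf [::]).2 z w.
rewrite {1}(row_sum_delta u) D_sum //; apply: eq_bigr => l _.
by rewrite D_scale.
Qed.


Lemma taylor_dir (d : nat) (f : 'rV[R]_d -> R) (x u : 'rV[R]_d) : smooth f ->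
  sO2 (fun h => f (x - h *: u) - f x + h * \sum_(l < d) u 0 l * partial l f x).
Proof.
move=> sf.
pose w := - u.
pose g := fun s : R => f (x + s *: w).
pose g1 := fun s : R => 'D_w f (x + s *: w).
pose g2 := fun s : R => 'D_w ('D_w f) (x + s *: w).
have dg (t : R) : is_derive t 1 g (g1 t) := line_derive ((sf [::]).2 _ _).
have dg1 (t : R) : is_derive t 1 g1 (g2 t) := line_derive ((sf [:: w]).2 _ _).
have cg2 : {for 0, continuous g2}.
  have cl : (fun s : R => x + s *: w) @ (0:R) --> (x + 0 *: w).
    by apply: cvgD; [exact: cvg_cst|exact: scalel_continuous].
  exact: (continuous_comp cl ((sf [:: w; w]).1 _)).
have [δ [B [d0 H]]] := @taylor1 g g1 g2 dg dg1 cg2.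
exists δ, B; split => // h hh; apply: le_trans (H h hh).
rewrite /g /g1 scale0r addr0 D_lin //.
rewrite /w scalerN.
have -> : \sum_(l < d) (- u) 0 l * partial l f x = - \sum_(l < d) u 0 l * partial l f x.
  by rewrite -sumrN; apply: eq_bigr => l _; rewrite mxE mulNr.
by rewrite mulrN opprK.
Qed.


Section Alg.
Variable d : nat.
Definition evalL (L : seq (R * 'rV[R]_d)) (dx : R) (f : 'rV[R]_d -> R) (y : 'rV[R]_d) : R :=
  \sum_(p <- L) p.1 * f (y - dx *: p.2).
Definition massL (L : seq (R * 'rV[R]_d)) : R := \sum_(p <- L) p.1.
Definition Dl (P : 'I_d -> R) (v : 'rV[R]_d) : R := \sum_(l < d) v 0 l * P l.
Definition momL (P : 'I_d -> R) (L : seq (R * 'rV[R]_d)) : R := \sum_(p <- L) p.1 * Dl P p.2.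
Definition shL (a : R) (v : 'rV[R]_d) (L : seq (R * 'rV[R]_d)) :=
  [seq (a * p.1, p.2 + v) | p <- L].

Lemma Dl_add P u v : Dl P (u + v) = Dl P u + Dl P v.
Proof. by rewrite /Dl -big_split; apply: eq_bigr => l _; rewrite mxE mulrDl. Qed.

Lemma evalL_flatten (T : Type) (s : seq T) (G : T -> seq (R * 'rV[R]_d)) dx f y :
  evalL (flatten [seq G t | t <- s]) dx f y = \sum_(t <- s) evalL (G t) dx f y.
Proof.
elim: s => [|t s IH]; first by rewrite /evalL !big_nil.
by rewrite /= big_cons /evalL big_cat /= -IH.
Qed.

Lemma massL_flatten (T : Type) (s : seq T) (G : T -> seq (R * 'rV[R]_d)) :
  massL (flatten [seq G t | t <- s]) = \sum_(t <- s) massL (G t).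
Proof.
elim: s => [|t s IH]; first by rewrite /massL !big_nil.
by rewrite /= big_cons /massL big_cat /= -IH.
Qed.

Lemma momL_flatten P (T : Type) (s : seq T) (G : T -> seq (R * 'rV[R]_d)) :
  momL P (flatten [seq G t | t <- s]) = \sum_(t <- s) momL P (G t).
Proof.
elim: s => [|t s IH]; first by rewrite /momL !big_nil.
by rewrite /= big_cons /momL big_cat /= -IH.
Qed.

Lemma evalL_sh a v L dx f y : evalL (shL a v L) dx f y = a * evalL L dx f (y - dx *: v).
Proof.
rewrite /evalL /shL big_map mulr_sumr; apply: eq_bigr => p _ /=.
by rewrite scalerDr opprD addrA [y - _ - _]addrAC mulrA.
Qed.

Lemma massL_sh a v L : massL (shL a v L) = a * massL L.
Proof. by rewrite /massL /shL big_map mulr_sumr. Qed.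

Lemma momL_sh P a v L : momL P (shL a v L) = a * (momL P L + massL L * Dl P v).
Proof.
rewrite /momL /massL /shL big_map [_ * Dl P v]mulr_suml -big_split /= mulr_sumr.
by apply: eq_bigr => p _ /=; rewrite Dl_add; ring.
Qed.


Section Scheme.
Variables (q : nat) (i1 : 'I_q) (M : 'M[R]_q) (c : 'I_q -> 'rV[int]_d) (s : 'rV[R]_q)
  (eps : 'cV[R]_q) (w : 'I_q -> 'rV[int]_d -> R) (S : seq 'rV[int]_d).
Hypothesis hM : M \in unitmx.
Hypothesis heps : eps i1 0 = 1.

Definition Bm := invmx M *m Kmx i1 s eps.

Fixpoint Lst (n : nat) (i : 'I_q) : seq (R * 'rV[R]_d) :=
  match n with
  | 0 => [seq (w i e, vR R e) | e <- S]
  | n'.+1 => flatten [seq flatten [seq shL (M i j * Bm j r) (vR R (c j)) (Lst n' r)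
                     | r <- index_enum 'I_q] | j <- index_enum 'I_q]
  end.

Lemma Kentry r k : Kmx i1 s eps r k =
  (r == k)%:R - s 0 r * ((r == k)%:R - eps r 0 * (k == i1)%:R).
Proof.
rewrite /Kmx mul_diag_mx !mxE big_ord1 !mxE eqxx /=.
by [].
Qed.

Lemma sum_B (X : 'I_q -> R) j :
  \sum_r' invmx M j r' * \sum_r Kmx i1 s eps r' r * X r = \sum_r Bm j r * X r.
Proof.
under eq_bigr do rewrite mulr_sumr.
rewrite exchange_big; apply: eq_bigr => r _; rewrite /Bm mxE mulr_suml.
by apply: eq_bigr => k _; rewrite mulrA.
Qed.

Lemma sum_MB (X : 'I_q -> R) i :
  \sum_j \sum_r M i j * Bm j r * X r = \sum_r Kmx i1 s eps i r * X r.
Proof.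
have MB : M *m Bm = Kmx i1 s eps by rewrite /Bm mulmxA mulmxV // mul1mx.
rewrite exchange_big; apply: eq_bigr => r _; rewrite -mulr_suml -MB mxE.
by [].
Qed.

Lemma rep n f dx y i :
  iter n (Eop i1 M c s eps dx) (wop w S dx f) i y = evalL (Lst n i) dx f y.
Proof.
elim: n i y => [|n IH] i y.
  by rewrite /= /wop /evalL big_map.
rewrite iterS /Eop /Top /mxact /Defs.shift /= evalL_flatten; apply: eq_bigr => j _.
rewrite evalL_flatten.
under [RHS]eq_bigr do rewrite evalL_sh -IH.
by rewrite sum_B mulr_sumr; apply: eq_bigr => r _; rewrite mulrA.
Qed.


Lemma sum_delta (X : 'I_q -> R) (r : 'I_q) : \sum_k (r == k)%:R * X k = X r.
Proof.
rewrite (bigD1 r) //= eqxx mul1r big1 ?addr0 // => k /negbTE.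
by rewrite eq_sym => ->; rewrite mul0r.
Qed.

Lemma Krow r : Kmx i1 s eps i1 r = (i1 == r)%:R.
Proof. by rewrite Kentry heps mul1r eq_sym subrr mulr0 subr0. Qed.

Lemma massL_S n i : massL (Lst n.+1 i) = \sum_r Kmx i1 s eps i r * massL (Lst n r).
Proof.
rewrite /= massL_flatten -sum_MB; apply: eq_bigr => j _; rewrite massL_flatten.
by apply: eq_bigr => r _; rewrite massL_sh.
Qed.

Lemma triple (A : 'I_q -> 'I_q -> 'I_q -> R) :
  \sum_j \sum_r \sum_k A j r k = \sum_k \sum_j \sum_r A j r k.
Proof. by rewrite [RHS]exchange_big; apply: eq_bigr => j _; exact: exchange_big. Qed.

Lemma momL_S P n : momL P (Lst n.+1 i1) = momL P (Lst n i1) +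
  \sum_k (\sum_j M i1 j * invmx M j k * Dl P (vR R (c j))) * massL (Lst n.+1 k).
Proof.
rewrite [momL P (Lst n.+1 i1)]/= momL_flatten.
rewrite (eq_bigr (fun j => \sum_(r < q) (M i1 j * Bm j r) * momL P (Lst n r) +
   \sum_(r < q) (M i1 j * Bm j r) * (massL (Lst n r) * Dl P (vR R (c j))))); last first.
  move=> j _; rewrite momL_flatten -big_split /=; apply: eq_bigr => r _.
  by rewrite momL_sh mulrDr.
rewrite big_split /=; congr (_ + _).
  by rewrite (sum_MB (fun r => momL P (Lst n r))); under eq_bigr do rewrite Krow; rewrite sum_delta.
under [RHS]eq_bigr do rewrite massL_S.
under [RHS]eq_bigr do rewrite mulr_suml.
under [RHS]eq_bigr do under eq_bigr do rewrite mulr_sumr.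
rewrite -triple; apply: eq_bigr => j _; apply: eq_bigr => r _.
rewrite /Bm mxE mulr_sumr mulr_suml; apply: eq_bigr => k _.
ring.
Qed.


Lemma mass_closed n r : massL (Lst n r) =
  omega0 w S r + pil n (s 0 r) * (eps r 0 * omega0 w S i1 - omega0 w S r).
Proof.
elim: n r => [|n IH] r.
  by rewrite /massL big_map /pil expr0 subrr mul0r addr0.
rewrite massL_S.
pose m := fun k => massL (Lst n k).
rewrite (eq_bigr (fun k => (r == k)%:R * (m k - s 0 r * m k) +
   (i1 == k)%:R * (s 0 r * eps r 0 * m k))); last first.
  by move=> k _; rewrite Kentry [(k == i1)]eq_sym /m; ring.
rewrite big_split /= !sum_delta /m !IH heps /pil exprS; ring.
Qed.

Lemma mass_i1 n : massL (Lst n i1) = omega0 w S i1.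
Proof. by rewrite mass_closed heps mul1r subrr mulr0 addr0. Qed.

Lemma mom_closed P n (g : 'I_q -> R) :
  (forall k, g k = \sum_j M i1 j * invmx M j k * Dl P (vR R (c j))) ->
  let om0 := omega0 w S in
  momL P (Lst n i1) = momL P (Lst 0 i1)
    + n%:R * (om0 i1 * g i1 + \sum_(r < q | r != i1) om0 r * g r)
    + \sum_(r < q | r != i1) (eps r 0 * om0 i1 - om0 r) * g r
         * \sum_(l < n) pil (n - l) (s 0 r).
Proof.
move=> Hg om0; set m0 := momL P (Lst 0 i1); elim: n => [|n IH].
  rewrite mul0r addr0 big1 ?addr0 // => r _; by rewrite big_ord0 mulr0.
rewrite momL_S IH.
rewrite [X in _ + X = _](eq_bigr (fun k => g k * (om0 k + pil n.+1 (s 0 k) * (eps k 0 * om0 i1 - om0 k)))); last first.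
  by move=> k _; rewrite mass_closed Hg.
rewrite [X in _ + X = _](bigD1 i1) //= heps mul1r subrr mulr0 addr0.
have E1 : \sum_(r < q | r != i1) g r * (om0 r + pil n.+1 (s 0 r) * (eps r 0 * om0 i1 - om0 r))
   = \sum_(r < q | r != i1) om0 r * g r
     + \sum_(r < q | r != i1) (eps r 0 * om0 i1 - om0 r) * g r * pil n.+1 (s 0 r).
  by rewrite -big_split; apply: eq_bigr => r _ /=; rewrite /om0; ring.
have E2 : \sum_(r < q | r != i1) (eps r 0 * om0 i1 - om0 r) * g r
         * \sum_(l < n.+1) pil (n.+1 - l) (s 0 r)
   = \sum_(r < q | r != i1) (eps r 0 * om0 i1 - om0 r) * g r * pil n.+1 (s 0 r)
     + \sum_(r < q | r != i1) (eps r 0 * om0 i1 - om0 r) * g r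
         * \sum_(l < n) pil (n - l) (s 0 r).
  rewrite -big_split; apply: eq_bigr => r _ /=; rewrite big_ord_recl subn0 mulrDr.
  by congr (_ + _); congr (_ * _); apply: eq_bigr => l _.
rewrite E1 E2 -natr1.
set A := \sum_(r < q | r != i1) om0 r * g r.
set B1 := \sum_(r < q | r != i1) (eps r 0 * om0 i1 - om0 r) * g r * pil n.+1 (s 0 r).
set C := \sum_(r < q | r != i1) (eps r 0 * om0 i1 - om0 r) * g r * \sum_(l < n) pil (n - l) (s 0 r).
ring.
Qed.


Lemma mom0 (f : 'rV[R]_d -> R) (x : 'rV[R]_d) :
  momL (fun l => partial l f x) (Lst 0 i1) = - omega1 w S i1 f x.
Proof.
rewrite /omega1 opprK /momL big_map /Dl /=.
under eq_bigr do rewrite mulr_sumr.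
rewrite exchange_big; apply: eq_bigr => l _; rewrite mulr_suml.
by apply: eq_bigr => e _; rewrite /vR mxE mulrA.
Qed.

Lemma gGop (f : 'rV[R]_d -> R) (x : 'rV[R]_d) k :
  \sum_j M i1 j * invmx M j k * Dl (fun l => partial l f x) (vR R (c j)) = Gop M c i1 k f x.
Proof. by rewrite /Gop; apply: eq_bigr => j _; rewrite /Dl; congr (_ * _); apply: eq_bigr => l _; rewrite /vR mxE. Qed.

End Scheme.

Lemma evalL_taylor (L : seq (R * 'rV[R]_d)) (f : 'rV[R]_d -> R) (x : 'rV[R]_d) : smooth f ->
  sO2 (fun h => evalL L h f x - (massL L * f x - h * momL (fun l => partial l f x) L)).
Proof.
move=> sf.
have := sO2_sum _ L (fun p h => p.1 * (f (x - h *: p.2) - f x + h * Dl (fun l => partial l f x) p.2))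
  (fun p => sO2_scale p.1 _ (@taylor_dir d f x p.2 sf)).
move/sO2_ext; apply => h _.
rewrite /evalL /massL /momL; elim: L => [|p L IH]; first by rewrite !big_nil; ring.
rewrite !big_cons IH.
set A := \sum_(j <- L) j.1 * f (x - h *: j.2).
set B := \sum_(j <- L) j.1.
set C := \sum_(j <- L) j.1 * Dl (fun l => partial l f x) j.2.
ring.
Qed.

End Alg.

End S.

Theorem proposition2 (R : realType) (d q : nat) (hd : (0 < d)%N) (hq : (0 < q)%N)
  (c : 'I_q -> 'rV[int]_d) (M : 'M[R]_q) (s : 'rV[R]_q) (eps : 'cV[R]_q)
  (lambda : R) (w : 'I_q -> 'rV[int]_d -> R) (S : seq 'rV[int]_d) :
  let i1 : 'I_q := Ordinal hq in
  M \in unitmx ->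
  (forall i : 'I_q, i != i1 -> 0 < s 0 i <= 2) ->
  eps i1 0 = 1 ->
  0 < lambda ->
  uniq S -> (forall i e, e \notin S -> w i e = 0) ->
  forall (n : nat), (0 < n)%N ->
  forall (phi : R -> 'rV[R]_d -> R),
  smooth (fun p : R * 'rV[R]_d => phi p.1 p.2) ->
  forall x : 'rV[R]_d,
  (* left-hand side: (z^n phi)(0,x) = phi(n dt, x), dt = dx / lambda *)
  (fun dx : R => phi (n%:R * (dx / lambda)) x
      - (phi 0 x + n%:R * (dx / lambda) * 'D_1 (fun t => phi t x) 0))
    =O_ (at_right (0:R)) (fun dx : R => dx ^+ 2)
  /\
  (* right-hand side: ((E^n w)_1 phi(0,.))(x) *)
  (let psi := phi 0 in
   let om0 := omega0 w S in
   (fun dx : R => start_scheme i1 M c s eps w S dx n psi x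
      - (om0 i1 * psi x
         - n%:R * dx *
           (om0 i1 * Gop M c i1 i1 psi x
            + \sum_(r < q | r != i1) om0 r * Gop M c i1 r psi x
            + n%:R^-1 * \sum_(r < q | r != i1)
                 (eps r 0 * om0 i1 - om0 r) * Gop M c i1 r psi x
                 * \sum_(l < n) pil (n - l) (s 0 r)
            - n%:R^-1 * omega1 w S i1 psi x)))
    =O_ (at_right (0:R)) (fun dx : R => dx ^+ 2)).
Proof.
move=> i1 hM hs heps hl huniq hw n hn phi sphi x.
pose F := fun p : (R * 'rV[R]_d)%type => phi p.1 p.2.
pose v : (R * 'rV[R]_d)%type := (1, 0).
pose a : (R * 'rV[R]_d)%type := (0, x).
have eg t : a + t *: v = (t, x).
  by apply/eqP; rewrite xpair_eqE /= -[t *: (1:R)]/(t * 1) mulr1 add0r scaler0 addr0 !eqxx.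
split.
  have dg (t : R) : is_derive t 1 (fun t => phi t x) ('D_v F (t, x)).
    have := @line_derive R _ _ _ _ _ ((sphi [::]).2 (a + t *: v) v).
    have -> : (fun z => F (a + z *: v)) = (fun z => phi z x).
      by apply/funext => z; rewrite eg.
    by rewrite eg.
  have dg1 (t : R) : is_derive t 1 (fun t => 'D_v F (t, x)) ('D_v ('D_v F) (t, x)).
    have := @line_derive R _ _ _ _ _ ((sphi [:: v]).2 (a + t *: v) v).
    have -> : (fun z => 'D_v F (a + z *: v)) = (fun z => 'D_v F (z, x)).
      by apply/funext => z; rewrite eg.
    by rewrite eg.
  have cg2 : {for 0, continuous (fun t => 'D_v ('D_v F) (t, x))}.
    have cl : (fun t : R => (t, x)) @ (0:R) --> ((0:R), x).
      exact: (@cvg_pair _ _ _ (nbhs (0:R)) (nbhs (0:R)) (nbhs x) _ _ _ id (fun _ => x) cvg_id (cvg_cst _)).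
    exact: (continuous_comp cl ((sphi [:: v; v]).1 _)).
  have [δ [B [d0 H]]] := @taylor1 R _ _ _ dg dg1 cg2.
  have T : sO2 R (fun h => phi h x - phi 0 x - h * 'D_v F (0, x)) by exists δ, B.
  have := sO2_comp R (n%:R / lambda) _ _ T.
  rewrite divr_gt0 ?ltr0n // => /(_ isT) T2.
  apply: (sO2_O R); apply: (sO2_ext R _ _ T2) => h _.
  rewrite (@derive_val _ _ _ _ _ _ _ (dg 0)) mulrA [n%:R / lambda * h]mulrAC.
  by rewrite -[n%:R * h / lambda]mulrA; ring.
move=> psi om0.
have spsi : smooth psi by exact: (smooth_slice R _ _ sphi).
apply: (sO2_O R).
apply: (sO2_ext R _ _ (evalL_taylor R d (Lst R d q i1 M c s eps w S n i1) psi x spsi)) => h _.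
rewrite /start_scheme rep mass_i1 // (@mom_closed R d q i1 M c s eps w S hM heps _ n (fun k => Gop M c i1 k psi x)); last first.
  by move=> k; rewrite gGop.
rewrite mom0 /om0.
have n0 : n%:R != 0 :> R by rewrite pnatr_eq0 -lt0n.
move: (\sum_(r < q | r != i1) _) => A.
move: (\sum_(r < q | r != i1) _) => C.
move: (evalL _ _ _ _ _ _) => E.
by field.
Qed.
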